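(* Let $R$ be a local ring and $s\in R$ a central element. Then $A\in M_2(R;s)$ is strongly clean if and only if one of the following holds: (1) $A\in U\big(M_2(R;s)\big)$; (2) $I_2-A\in U\big(M_2(R;s)\big)$; (3) $A$ is similar to $\left[\begin{smallmatrix} a&0\\ 0&b\end{smallmatrix}\right]$ for some $a,b\in R$.
   Context: All rings are associative with identity. A ring $R$ is local if $R/J(R)$ is a division ring, where $J(R)$ is the Jacobson radical; $U(T)$ is the group of units of a ring $T$. For a ring $R$ and a central element $s\in R$, $M_2(R;s)$ denotes the ring whose elements are the $2\times 2$ arrays $\left[\begin{smallmatrix} a&b\\ c&d\end{smallmatrix}\right]$ with $a,b,c,d\in R$, with componentwise addition and multiplication $\left[\begin{smallmatrix} a&b\\ c&d\end{smallmatrix}\right]\left[\begin{smallmatrix} a'&b'\\ c'&d'\end{smallmatrix}\right]=\left[\begin{smallmatrix} aa'+s^2bc'&ab'+bd'\\ ca'+dc'&s^2cb'+dd'\end{smallmatrix}\right]$, with identity $I_2$. Two elements $A,B\in M_2(R;s)$ are similar if $B=P^{-1}AP$ for some unit $P$ of $M_2(R;s)$. An element $a$ of a ring $T$ is strongly clean if there is an idempotent $e\in T$ with $ae=ea$ and $a-e\in U(T)$. *)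

(* Defs.v *)
From HB Require Import structures.
From mathcomp Require Import all_boot all_algebra.
Set Implicit Arguments. Unset Strict Implicit. Unset Printing Implicit Defensive.
Import GRing.Theory.
Local Open Scope ring_scope.

Definition left_ideal (R : nzRingType) (I : R -> Prop) : Prop :=
  I 0 /\ (forall x y, I x -> I y -> I (x - y)) /\ (forall r x, I x -> I (r * x)).

Definition maximal_left_ideal (R : nzRingType) (I : R -> Prop) : Prop :=
  left_ideal I /\ ~ I 1 /\
  (forall K : R -> Prop, left_ideal K -> ~ K 1 -> (forall x, I x -> K x) ->
     forall x, K x -> I x).

Definition jacobson (R : nzRingType) (x : R) : Prop :=
  forall I : R -> Prop, maximal_left_ideal I -> I x.

(* R is local: R/J(R) is a division ring, i.e. R/J(R) is nonzero and every
   nonzero class x + J(R) has a two-sided inverse y + J(R). *)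
Definition local_ring (R : nzRingType) : Prop :=
  ~ jacobson (1 : R) /\
  forall x : R, ~ jacobson x ->
    exists y : R, jacobson (x * y - 1) /\ jacobson (y * x - 1).

Definition central (R : nzRingType) (s : R) : Prop := forall r : R, s * r = r * s.

Record M2 (R : Type) := mkM2 { m11 : R; m12 : R; m21 : R; m22 : R }.

Section M2ops.
Variables (R : nzRingType) (s : R).

Definition M2add (A B : M2 R) : M2 R :=
  mkM2 (m11 A + m11 B) (m12 A + m12 B) (m21 A + m21 B) (m22 A + m22 B).
Definition M2opp (A : M2 R) : M2 R :=
  mkM2 (- m11 A) (- m12 A) (- m21 A) (- m22 A).
Definition M2sub (A B : M2 R) : M2 R := M2add A (M2opp B).
Definition M2one : M2 R := mkM2 1 0 0 1.
Definition M2mul (A B : M2 R) : M2 R :=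
  mkM2 (m11 A * m11 B + s ^+ 2 * m12 A * m21 B)
       (m11 A * m12 B + m12 A * m22 B)
       (m21 A * m11 B + m22 A * m21 B)
       (s ^+ 2 * m21 A * m12 B + m22 A * m22 B).

Definition M2unit (A : M2 R) : Prop :=
  exists B : M2 R, M2mul A B = M2one /\ M2mul B A = M2one.

Definition M2similar (A B : M2 R) : Prop :=
  exists P Q : M2 R, M2mul P Q = M2one /\ M2mul Q P = M2one /\
    B = M2mul (M2mul Q A) P.

Definition M2strongly_clean (A : M2 R) : Prop :=
  exists e : M2 R, M2mul e e = e /\ M2mul A e = M2mul e A /\
    M2unit (M2sub A e).
End M2ops.

(* Main.v *)
Require Import Defs.
From mathcomp Require Import all_boot all_algebra.
From mathcomp Require Import classical_sets.
From Stdlib Require Import Classical.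
Set Implicit Arguments. Unset Strict Implicit. Unset Printing Implicit Defensive.
Import GRing.Theory.
Local Open Scope ring_scope.

Section Local.
Variable R : nzRingType.

Lemma jac_sub (x y : R) : jacobson x -> jacobson y -> jacobson (x - y).
Proof. by move=> hx hy I hI; case: (hI) => [[_ [hs _]] _]; apply: hs; [apply hx|apply hy]. Qed.

Lemma jac_mull (r x : R) : jacobson x -> jacobson (r * x).
Proof. by move=> hx I hI; case: (hI) => [[_ [_ hm]] _]; apply: hm; apply hx. Qed.

Lemma jac0 : jacobson (0 : R).
Proof. by move=> I [[h _] _]. Qed.

Lemma max_exists (y : R) : ~ (exists v, v * y = 1) ->
  exists M : R -> Prop, maximal_left_ideal M /\ M y.
Proof.
move=> nly.
pose P (A : set R) := (forall x z, A x -> A z -> A (x - z)) /\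
  (forall r x, A x -> A (r * x)) /\ ~ A 1 /\ (forall x, A x -> A y).
have K0P : P (fun x => exists r, x = r * y).
  split; first by move=> _ _ [r ->] [r' ->]; exists (r - r'); rewrite mulrBl.
  split; first by move=> r _ [r' ->]; exists (r * r'); rewrite mulrA.
  split; first by move=> [r hr]; apply: nly; exists r.
  by move=> _ _; exists 1; rewrite mul1r.
have [M [PM Mmax]] : exists A, P A /\ forall B, proper A B -> ~ P B.
  apply: Zorn_bigcup => F FP Ftot.
  split.
    move=> x z [X FX Xx] [Z FZ Zz].
    case: (Ftot X Z FX FZ) => [XZ|ZX].
      by exists Z => //; have [h _] := FP Z FZ; apply: h => //; apply: XZ.
    by exists X => //; have [h _] := FP X FX; apply: h => //; apply: ZX.
  split; first by move=> r x [X FX Xx]; exists X => //; have [_ [h _]] := FP X FX; apply: h.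
  split; first by move=> [X FX X1]; have [_ [_ [h _]]] := FP X FX; apply: h.
  by move=> x [X FX Xx]; exists X => //; have [_ [_ [_ h]]] := FP X FX; apply: h Xx.
have [_ [Mmul [M1 My]]] := PM.
have [Msub _] := PM.
have hMy : M y.
  apply: NNPP => nMy; apply: (Mmax _ _ K0P); split.
    by move=> x Mx; exfalso; apply: nMy; apply: My Mx.
  by move=> h; apply: nMy; apply: h; exists 1; rewrite mul1r.
exists M; split => //.
split; first by split; [rewrite -(subrr y); apply: Msub| split].
split => // K [K0 [Ksub Kmul]] K1 MK x Kx.
apply: NNPP => nMx.
apply: (Mmax K); first by split => // hKM; apply: nMx; apply: hKM.
split=> //; split=> //; split=> // z _; apply: MK hMy.
Qed.

Lemma jac_linv (j : R) : jacobson j -> exists v, v * (1 - j) = 1.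
Proof.
move=> hj; apply: NNPP => nl.
have [M [hM M1j]] := max_exists nl.
have Mj := hj M hM.
case: hM => [[_ [Msub _]] [M1 _]]; apply: M1.
have := Msub _ _ M1j (Msub _ _ (Msub _ _ Mj Mj) Mj).
by rewrite subrr sub0r opprK subrK.
Qed.

Hypothesis loc : local_ring R.

Definition unitR (x : R) := exists y, x * y = 1 /\ y * x = 1.

Lemma nJ_linv (x : R) : ~ jacobson x -> exists l, l * x = 1.
Proof.
move=> nx; have [y [_ hyx]] := loc.2 x nx.
have [w hw] := jac_linv (jac_sub jac0 hyx).
by exists (w * y); rewrite -mulrA -[RHS]hw sub0r opprB subKr.
Qed.

Lemma unit_nJ (x : R) : unitR x -> ~ jacobson x.
Proof. by move=> [y [_ hyx]] hx; apply: loc.1; rewrite -hyx; apply: jac_mull. Qed.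

Lemma nJ_unit (x : R) : ~ jacobson x -> unitR x.
Proof.
move=> nx; have [l hl] := nJ_linv nx.
have nl : ~ jacobson l.
  move=> hJl.
  have [v hv] := jac_linv (jac_mull x hJl).
  have : v * (1 - x * l) * x = x by rewrite hv mul1r.
  rewrite -mulrA mulrBl mul1r -mulrA hl mulr1 subrr mulr0 => x0.
  by move: hl; rewrite -x0 mulr0 => /esym/eqP; rewrite oner_eq0.
have [m hm] := nJ_linv nl.
have xm : x = m by rewrite -[RHS]mulr1 -hl mulrA hm mul1r.
by exists l; split => //; rewrite xm hm.
Qed.

Lemma jac_mulr (x r : R) : jacobson x -> jacobson (x * r).
Proof.
move=> hx; apply: NNPP => nxr.
have [u [hu1 hu2]] := nJ_unit nxr.
have nru : ~ jacobson (r * u).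
  by move=> h; apply: loc.1; rewrite -hu1 -mulrA; apply: jac_mull.
have [w [hw1 hw2]] := nJ_unit nru.
apply: (unit_nJ _ hx); exists (r * u); split; first by rewrite mulrA.
have xw : x = w by rewrite -[x]mulr1 -hw1 !mulrA hu1 mul1r.
by rewrite xw.
Qed.

Lemma jac_add (x y : R) : jacobson x -> jacobson y -> jacobson (x + y).
Proof. by move=> hx hy; have := jac_sub hx (jac_sub jac0 hy); rewrite sub0r opprK. Qed.

Lemma jac_opp (x : R) : jacobson x -> jacobson (- x).
Proof. by move=> hx; rewrite -sub0r; apply: jac_sub => //; apply: jac0. Qed.

Lemma unit_or (x : R) : unitR x \/ unitR (1 - x).
Proof.
case: (classic (jacobson x)) => hx; last by left; apply: nJ_unit.
right; apply: nJ_unit => h; apply: loc.1.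
by have := jac_add h hx; rewrite subrK.
Qed.

Lemma unit_subJ (d j : R) : unitR d -> jacobson j -> unitR (d - j).
Proof.
move=> ud hj; apply: nJ_unit => h; apply: (unit_nJ ud).
by have := jac_add h hj; rewrite subrK.
Qed.

End Local.
Section Mat.
Variables (R : nzRingType) (s : R).
Hypothesis hs : central s.

Lemma s2c (r : R) : s ^+ 2 * r = r * s ^+ 2.
Proof. by rewrite expr2 -mulrA hs !mulrA hs. Qed.

Local Notation mul := (M2mul s).
Local Notation I := (M2one R).
Local Notation Z := (mkM2 0 0 0 (0:R)).

Lemma M2mulA X Y Z : mul (mul X Y) Z = mul X (mul Y Z).
Proof.
case: X => x1 x2 x3 x4; case: Y => y1 y2 y3 y4; case: Z => z1 z2 z3 z4.
rewrite /M2mul /=; move: (s ^+ 2) s2c => t tc.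
by congr mkM2; rewrite !(mulrDl, mulrDr, mulrA) -?[_ * t]tc ?mulrA addrACA.
Qed.

Lemma M2mul1l X : mul I X = X.
Proof.
case: X => x1 x2 x3 x4; rewrite /M2mul /=.
by congr mkM2; rewrite !(mul1r, mul0r, mulr0, addr0, add0r).
Qed.

Lemma M2mul1r X : mul X I = X.
Proof.
case: X => x1 x2 x3 x4; rewrite /M2mul /=.
by congr mkM2; rewrite !(mulr1, mul0r, mulr0, addr0, add0r).
Qed.

Lemma M2mulBr X Y Z : mul X (M2sub Y Z) = M2sub (mul X Y) (mul X Z).
Proof.
case: X => x1 x2 x3 x4; case: Y => y1 y2 y3 y4; case: Z => z1 z2 z3 z4.
by rewrite /M2mul /M2sub /M2add /M2opp /=; congr mkM2;
  rewrite !(mulrDr, mulrN) opprD addrACA.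
Qed.

Lemma M2mulBl X Y Z : mul (M2sub X Y) Z = M2sub (mul X Z) (mul Y Z).
Proof.
case: X => x1 x2 x3 x4; case: Y => y1 y2 y3 y4; case: Z => z1 z2 z3 z4.
by rewrite /M2mul /M2sub /M2add /M2opp /=; congr mkM2;
  rewrite !(mulrDl, mulrDr, mulNr, mulrN) opprD addrACA.
Qed.

Lemma M2subrr X : M2sub X X = Z.
Proof. by case: X => *; rewrite /M2sub /M2add /M2opp /=; congr mkM2; rewrite subrr. Qed.

Lemma M2subr0 X : M2sub X Z = X.
Proof. by case: X => *; rewrite /M2sub /M2add /M2opp /=; congr mkM2; rewrite oppr0 addr0. Qed.

Lemma M2unit_mul X Y : M2unit s X -> M2unit s Y -> M2unit s (mul X Y).
Proof.
move=> [X' [h1 h2]] [Y' [h3 h4]]; exists (mul Y' X'); split.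
  by rewrite M2mulA -(M2mulA Y) h3 M2mul1l.
by rewrite M2mulA -(M2mulA X') h2 M2mul1l.
Qed.

Lemma M2unit_lr X L Rr : mul L X = I -> mul X Rr = I -> M2unit s X.
Proof.
move=> hl hr; exists Rr; split => //.
have : L = Rr by rewrite -[L]M2mul1r -hr -M2mulA hl M2mul1l.
by move=> <-.
Qed.

Lemma M2unit_opp X : M2unit s X -> M2unit s (M2opp X).
Proof.
case: X => x1 x2 x3 x4 [[y1 y2 y3 y4]]; rewrite /M2mul /M2opp /= => [[h1 h2]].
by exists (mkM2 (-y1) (-y2) (-y3) (-y4)); rewrite /M2mul /= !(mulrN, mulNr, opprK); split.
Qed.


Lemma diag_unit x y xi yi : x * xi = 1 -> xi * x = 1 -> y * yi = 1 -> yi * y = 1 ->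
  M2unit s (mkM2 x 0 0 y).
Proof.
move=> h1 h2 h3 h4; exists (mkM2 xi 0 0 yi); rewrite /M2mul /=.
by rewrite !(mulr0, mul0r, addr0, add0r, h1, h2, h3, h4).
Qed.

Section Idem.
Variables a b c d : R.
Hypothesis he : mul (mkM2 a b c d) (mkM2 a b c d) = mkM2 a b c d.

Let h1 : a * a + s ^+ 2 * b * c = a. Proof. by case: he. Qed.
Let h2 : a * b + b * d = b. Proof. by case: he. Qed.
Let h3 : c * a + d * c = c. Proof. by case: he. Qed.
Let h4 : s ^+ 2 * c * b + d * d = d. Proof. by case: he. Qed.
Let h1' : a - a * a = s ^+ 2 * b * c. Proof. by rewrite -{1}h1 addrC addKr. Qed.
Let h2' : b - b * d = a * b. Proof. by rewrite -{1}h2 addrK. Qed.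
Let h2'' : b - a * b = b * d. Proof. by rewrite -{1}h2 addrC addKr. Qed.
Let h3' : c - d * c = c * a. Proof. by rewrite -{1}h3 addrK. Qed.
Let h3'' : c - c * a = d * c. Proof. by rewrite -{1}h3 addrC addKr. Qed.
Let h4' : d - d * d = s ^+ 2 * c * b. Proof. by rewrite -{1}h4 addrK. Qed.

Let e := mkM2 a b c d.
Let P1 := mkM2 a (-b) c (1 - d).
Let Y1 := mkM2 a b (-c) (1 - d).
Let P2 := mkM2 (1 - a) b (-c) d.
Let Y2 := mkM2 (1 - a) (-b) c d.

Ltac solve_e := rewrite /M2mul /=; congr mkM2;
  rewrite ?(mulr0, mul0r, mulr1, addr0, add0r, mulrN, mulNr, mulrBr, mulrBl, mul1r, opprK, oppr0) //;
  rewrite ?(h1', h2', h2'', h3', h3'', h4') ?(addNr, subrr, subrK) //; by rewrite addrC subrK.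

Lemma eP1 : mul e P1 = mul P1 (mkM2 1 0 0 0).
Proof. solve_e. Qed.
Lemma P1Y1 : mul P1 Y1 = mkM2 a 0 0 (1 - d).
Proof. solve_e. Qed.
Lemma Y1P1 : mul Y1 P1 = mkM2 a 0 0 (1 - d).
Proof. solve_e. Qed.
Lemma eP2 : mul e P2 = mul P2 (mkM2 0 0 0 1).
Proof. solve_e. Qed.
Lemma P2Y2 : mul P2 Y2 = mkM2 (1 - a) 0 0 d.
Proof. solve_e. Qed.
Lemma Y2P2 : mul Y2 P2 = mkM2 (1 - a) 0 0 d.
Proof. solve_e. Qed.

End Idem.


Lemma lowtri_unit x : M2unit s (mkM2 1 0 x 1).
Proof.
exists (mkM2 1 0 (-x) 1); rewrite /M2mul /=.
by rewrite !(mulr1, mul1r, mulr0, mul0r, addr0, add0r, subrr, addNr).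
Qed.

Lemma uptri_unit x : M2unit s (mkM2 1 x 0 1).
Proof.
exists (mkM2 1 (-x) 0 1); rewrite /M2mul /=.
by rewrite !(mulr1, mul1r, mulr0, mul0r, addr0, add0r, subrr, addNr).
Qed.

Section Idem2.
Variables a b c d : R.
Hypothesis he : mul (mkM2 a b c d) (mkM2 a b c d) = mkM2 a b c d.

Lemma conj1 : unitR a -> unitR (1 - d) ->
  exists P Q, mul P Q = I /\ mul Q P = I /\
    mul (mkM2 a b c d) P = mul P (mkM2 1 0 0 0).
Proof.
move=> [ai [ha1 ha2]] [di [hd1 hd2]].
have [Di [hD1 hD2]] := diag_unit ha1 ha2 hd1 hd2.
have [Q [h h']] : M2unit s (mkM2 a (-b) c (1 - d)).
  apply: (M2unit_lr (L := mul Di (mkM2 a b (-c) (1 - d))) (Rr := mul (mkM2 a b (-c) (1 - d)) Di)).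
  - by rewrite M2mulA (Y1P1 he).
  - by rewrite -M2mulA (P1Y1 he).
by exists (mkM2 a (-b) c (1 - d)), Q; split => //; split => //; apply: eP1.
Qed.

Lemma conj2 : unitR (1 - a) -> unitR d ->
  exists P Q, mul P Q = I /\ mul Q P = I /\
    mul (mkM2 a b c d) P = mul P (mkM2 0 0 0 1).
Proof.
move=> [ai [ha1 ha2]] [di [hd1 hd2]].
have [Di [hD1 hD2]] := diag_unit ha1 ha2 hd1 hd2.
have [Q [h h']] : M2unit s (mkM2 (1 - a) b (-c) d).
  apply: (M2unit_lr (L := mul Di (mkM2 (1 - a) (-b) c d)) (Rr := mul (mkM2 (1 - a) (-b) c d) Di)).
  - by rewrite M2mulA (Y2P2 he).
  - by rewrite -M2mulA (P2Y2 he).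
by exists (mkM2 (1 - a) b (-c) d), Q; split => //; split => //; apply: eP2.
Qed.

Hypothesis loc : local_ring R.

Lemma idem_one : unitR a -> unitR d -> jacobson (1 - d) -> mkM2 a b c d = I.
Proof.
move=> [ai [ha1 ha2]] ud hj.
have h3' : c - d * c = c * a by case: he => _ _ h3 _; rewrite -{1}h3 addrK.
have cE : c = (1 - d) * c * ai by rewrite mulrBl mul1r h3' -mulrA ha1 mulr1.
have jt : jacobson (s ^+ 2 * c * ai * b).
  rewrite {1}cE !mulrA; do 4 apply: (jac_mulr loc); exact: jac_mull.
have [di [hd1 hd2]] := unit_subJ loc ud jt.
have uDg := diag_unit ha1 ha2 hd1 hd2.
have eLDU : mkM2 a b c d = mul (mul (mkM2 1 0 (c * ai) 1)
   (mkM2 a 0 0 (d - s ^+ 2 * c * ai * b))) (mkM2 1 (ai * b) 0 1).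
  rewrite /M2mul /=; congr mkM2;
    rewrite ?(mulr1, mul1r, mulr0, mul0r, addr0, add0r) //.
  - by rewrite mulrA ha1 mul1r.
  - by rewrite -mulrA ha2 mulr1.
  - by rewrite -(mulrA c ai a) ha2 mulr1 (mulrA _ ai b) addrC subrK.
have [e' [he1 he2]] : M2unit s (mkM2 a b c d).
  by rewrite eLDU; apply: M2unit_mul (M2unit_mul (lowtri_unit _) uDg) (uptri_unit _).
by rewrite -[LHS]M2mul1r -he1 -M2mulA he.
Qed.

End Idem2.


Lemma comm11 X : mul X (mkM2 1 0 0 0) = mul (mkM2 1 0 0 0) X -> m12 X = 0 /\ m21 X = 0.
Proof.
case: X => x1 x2 x3 x4; rewrite /M2mul /= !(mulr0, mul0r, mulr1, mul1r, addr0, add0r).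
move=> h; have := congr1 (@m12 R) h; have := congr1 (@m21 R) h => /= h21 h12.
by split; [move: h12 | move: h21] => ->.
Qed.

Lemma comm22 X : mul X (mkM2 0 0 0 1) = mul (mkM2 0 0 0 1) X -> m12 X = 0 /\ m21 X = 0.
Proof.
case: X => x1 x2 x3 x4; rewrite /M2mul /= !(mulr0, mul0r, mulr1, mul1r, addr0, add0r).
move=> h; have := congr1 (@m12 R) h; have := congr1 (@m21 R) h => /= h21 h12.
by split; [move: h12 | move: h21] => ->.
Qed.

Lemma to_diag A e P Q F : mul P Q = I -> mul Q P = I -> mul e P = mul P F ->
  mul A e = mul e A ->
  (forall X, mul X F = mul F X -> m12 X = 0 /\ m21 X = 0) ->
  exists a b, M2similar s A (mkM2 a 0 0 b).
Proof.
move=> hPQ hQP heP hAe hF.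
have QeF : mul Q e = mul F Q.
  by rewrite -[mul Q e]M2mul1r -hPQ -M2mulA (M2mulA Q e P) heP -M2mulA hQP M2mul1l.
have hB : mul (mul (mul Q A) P) F = mul F (mul (mul Q A) P).
  rewrite M2mulA -heP -M2mulA (M2mulA Q A e) hAe -M2mulA QeF.
  by rewrite !M2mulA.
have [h12 h21] := hF _ hB.
exists (m11 (mul (mul Q A) P)), (m22 (mul (mul Q A) P)), P, Q; split => //; split => //.
by move: h12 h21; case: (mul (mul Q A) P) => x1 x2 x3 x4 /= -> ->.
Qed.

Lemma idem_compl (e : M2 R) : mul e e = e -> mul (M2sub I e) (M2sub I e) = M2sub I e.
Proof. by move=> hee; rewrite M2mulBl M2mul1l M2mulBr M2mul1r hee M2subrr M2subr0. Qed.

Lemma opp_sub (X Y : M2 R) : M2opp (M2sub X Y) = M2sub Y X.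
Proof.
by case: X => *; case: Y => *; rewrite /M2sub /M2add /M2opp /=; congr mkM2;
  rewrite opprD opprK addrC.
Qed.

Lemma sim_sc (A D : M2 R) : M2similar s A D -> M2strongly_clean s D -> M2strongly_clean s A.
Proof.
move=> [P [Q [hPQ [hQP hD]]]] [e0 [he0 [hDe hu]]].
have AE : A = mul (mul P D) Q.
  by rewrite hD !M2mulA hPQ M2mul1r -M2mulA hPQ M2mul1l.
exists (mul (mul P e0) Q); split.
  by rewrite !M2mulA -(M2mulA Q P) hQP M2mul1l -(M2mulA e0 e0) he0.
split.
  rewrite AE !M2mulA -!(M2mulA Q P) hQP !M2mul1l.
  by rewrite -(M2mulA D e0) hDe M2mulA.
have -> : M2sub A (mul (mul P e0) Q) = mul (mul P (M2sub D e0)) Q.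
  by rewrite M2mulBr M2mulBl AE.
apply: M2unit_mul; first apply: M2unit_mul => //.
  by exists Q.
by exists P.
Qed.

Lemma idem01 (x : R) : x = 0 \/ x = 1 -> x * x = x.
Proof. by case=> ->; rewrite ?mulr0 ?mulr1. Qed.

Lemma comm01 (x y : R) : x = 0 \/ x = 1 -> x * y = y * x.
Proof. by case=> ->; rewrite ?mulr0 ?mul0r ?mulr1 ?mul1r. Qed.

Hypothesis loc : local_ring R.

Lemma pick01 (x : R) : exists e1, (e1 = 0 \/ e1 = 1) /\ unitR (x - e1).
Proof.
case: (unit_or loc x) => [ux | u1x].
  by exists 0; split; [left | rewrite subr0].
exists 1; split; first by right.
by case: u1x => y [h1 h2]; exists (- y); rewrite -opprB !mulrNN; split.
Qed.

Lemma diag_sc a b : M2strongly_clean s (mkM2 a 0 0 b).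
Proof.
have [e1 [h1 [ai [ha1 ha2]]]] := pick01 a.
have [e2 [h2 [bi [hb1 hb2]]]] := pick01 b.
exists (mkM2 e1 0 0 e2); split.
  by rewrite /M2mul /= !(mulr0, mul0r, addr0, add0r) !idem01.
split.
  by rewrite /M2mul /= !(mulr0, mul0r, addr0, add0r) (comm01 a h1) (comm01 b h2).
rewrite /M2sub /M2add /M2opp /= oppr0 addr0.
exact: (diag_unit ha1 ha2 hb1 hb2).
Qed.

Lemma mainthm (A : M2 R) :
  M2strongly_clean s A <->
   (M2unit s A \/ M2unit s (M2sub (M2one R) A) \/
    exists a b : R, M2similar s A (mkM2 a 0 0 b)).
Proof.
split.
  move=> [e [hee [hAe hu]]].
  case: e hee hAe hu => a b c d hee hAe hu.
  have c1 : unitR a -> unitR (1 - d) -> exists a b : R, M2similar s A (mkM2 a 0 0 b).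
    move=> ua u1d; have [P [Q [h1 [h2 h3]]]] := conj1 hee ua u1d.
    exact: (to_diag h1 h2 h3 hAe comm11).
  have c2 : unitR (1 - a) -> unitR d -> exists a b : R, M2similar s A (mkM2 a 0 0 b).
    move=> u1a ud; have [P [Q [h1 [h2 h3]]]] := conj2 hee u1a ud.
    exact: (to_diag h1 h2 h3 hAe comm22).
  case: (unit_or loc a) => ua; case: (unit_or loc d) => ud.
  - case: (classic (unitR (1 - d))) => u1d; first by right; right; exact: c1.
    right; left.
    have j1d : jacobson (1 - d) by apply: NNPP => n; apply: u1d; apply: (nJ_unit loc n).
    rewrite (idem_one hee loc ua ud j1d) in hu.
    by rewrite -opp_sub; apply: M2unit_opp.
  - by right; right; exact: c1.
  - by right; right; exact: c2.
  - case: (classic (unitR d)) => ud'; first by right; right; exact: c2.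
    left.
    have jd : jacobson d by apply: NNPP => n; apply: ud'; apply: (nJ_unit loc n).
    have hff := idem_compl hee.
    move: hff; rewrite /M2sub /M2add /M2opp /= => hff.
    have := idem_one hff loc ua ud; rewrite subKr => /(_ jd) [] ha hb hc hd.
    have a0 : a = 0 by rewrite -[a](subKr 1) ha subrr.
    have b0 : b = 0 by rewrite -[b](subKr 0) hb subrr.
    have c0 : c = 0 by rewrite -[c](subKr 0) hc subrr.
    have d0 : d = 0 by rewrite -[d](subKr 1) hd subrr.
    by subst; rewrite M2subr0 in hu.
move=> [hu | [hu | [a0 [b0 hsim]]]].
- exists (mkM2 0 0 0 0); rewrite M2subr0; split; last split => //;
  by case: A hu => * ; rewrite /M2mul /= !(mulr0, mul0r, addr0).
- exists (@M2one R); rewrite M2mul1l M2mul1r; split => //; split => //.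
  by rewrite M2mul1l.
  by rewrite -opp_sub; apply: M2unit_opp.
- exact: (sim_sc hsim (diag_sc a0 b0)).
Qed.

End Mat.

Theorem corollary2p12 (R : nzRingType) (s : R) (A : M2 R) :
  local_ring R -> central s ->
  (M2strongly_clean s A <->
   (M2unit s A \/ M2unit s (M2sub (M2one R) A) \/
    exists a b : R, M2similar s A (mkM2 a 0 0 b))).
Proof. by move=> loc hs; apply: mainthm. Qed.
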